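(* Let $u_1\ge u_2\ge\cdots\ge u_a\ge 0$ and $w_1\ge w_2\ge\cdots\ge w_b\ge 0$ be two finite non-increasing lists (the unallocated item values and the witness item values), and set $w_r:=0$ for $r>b$. Suppose $u_r\ge w_r$ for all $r\le a$. Let $T\subseteq\{1,\dots,a\}$ and $X\subseteq\{1,\dots,b\}$ be sets of positions, and suppose there is an injective map $f:T\to X$ with $f(t)\le t$ for every $t\in T$. Delete the entries at positions in $T$ from the $u$-list and the entries at positions in $X$ from the $w$-list, and re-index the remaining entries in non-increasing order as $u'_1\ge\cdots\ge u'_{a-|T|}$ and $w'_1\ge\cdots\ge w'_{b-|X|}$ (again with $w'_r:=0$ beyond the end). Then $u'_r\ge w'_r$ for all $r\le a-|T|$.
   Context: In the paper's terminology: $U$ is the set of unallocated items and $W$ the set of items of a witness allocation; $W$ is a witness (for agent $i$) if the $r$-th largest value in $W$ is at most the $r$-th largest value in $U$ for all $r\le|U|$. Given a bundle $T$ allocated from $U$, a bundle $X\subseteq W$ is a dominance bundle for $T$ if there is an injection $f:T\to X$ such that the rank of $f(u)$ in $W$ is at most the rank of $u$ in $U$ for all $u\in T$ (rank 1 = largest). The claim says removing $T$ from $U$ and $X$ from $W$ leaves a witness. *)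

(* Defs.v *)
From mathcomp Require Import all_boot all_order all_algebra.
Set Implicit Arguments. Unset Strict Implicit. Unset Printing Implicit Defensive.
Import Order.TTheory GRing.Theory Num.Theory.
Local Open Scope ring_scope.

(* Lists are 0-indexed: position r of the paper is index r-1 here.
   [nth 0 w r] automatically gives w_r := 0 beyond the end. *)

Definition delete_and_resort (R : realDomainType) (s : seq R) (P : seq nat) : seq R :=
  sort (fun x y : R => y <= x)
       [seq nth 0 s i | i <- iota 0 (size s) & i \notin P].

(* Main.v *)
Require Import Defs.
From mathcomp Require Import all_boot all_order all_algebra zify.
Import Order.TTheory GRing.Theory Num.Theory.

Lemma iotaS0 n : iota 0 n.+1 = rcons (iota 0 n) n.
Proof. by rewrite -addn1 iotaD add0n cats1. Qed.

Lemma cnt_mono (P : pred nat) m1 m2 : (m1 <= m2)%N ->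
  (count P (iota 0 m1) <= count P (iota 0 m2))%N.
Proof.
move=> h; rewrite -(subnKC h) iotaD count_cat; exact: leq_addr.
Qed.

Lemma K1 (P : pred nat) n r m : (count P (iota 0 m) <= r)%N ->
  (minn m n <= nth n (filter P (iota 0 n)) r)%N.
Proof.
move=> hc; elim: n => [|n IH]; first by rewrite minn0.
rewrite iotaS0 filter_rcons.
set F := filter P (iota 0 n).
have hsF : size F = count P (iota 0 n) by rewrite size_filter.
have hF : forall k, (k <= m)%N -> (count P (iota 0 k) <= r)%N.
    by move=> k hk; have := cnt_mono P _ _ hk; lia.
case: (ltnP r (size F)) => hr.
  have e : nth n.+1 (if P n then rcons F n else F) r = nth n F r.
    case: (P n); last exact: set_nth_default.
    by rewrite nth_rcons hr; apply: set_nth_default.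
  rewrite e; case: (leqP m n) => hmn.
    by move: IH; rewrite -/F; lia.
  have := hF n (ltnW hmn); lia.
case hP: (P n).
  rewrite nth_rcons; case: ltnP => h1; first lia.
  case: eqP => h2.
    case: (leqP m n) => hmn; first lia.
    have := hF n.+1 hmn; rewrite iotaS0 -cats1 count_cat /= hP; lia.
  by rewrite /minn; case: ifP; lia.
by rewrite nth_default ?geq_minr.
Qed.

Lemma K2 (P : pred nat) n r : (r < size (filter P (iota 0 n)))%N ->
  (count P (iota 0 (nth n (filter P (iota 0 n)) r)) <= r)%N.
Proof.
elim: n => [|n IH] //.
rewrite iotaS0 filter_rcons.
set F := filter P (iota 0 n).
have hsF : size F = count P (iota 0 n) by rewrite size_filter.
case: (ltnP r (size F)) => hr.
  have e : nth n.+1 (if P n then rcons F n else F) r = nth n F r.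
    case: (P n); last exact: set_nth_default.
    by rewrite nth_rcons hr; apply: set_nth_default.
  by rewrite e => _; apply: IH.
case hP: (P n); last lia.
rewrite size_rcons nth_rcons => h; case: ltnP => h1; first lia.
have -> : r = size F by lia.
by rewrite eqxx hsF.
Qed.

Local Open Scope ring_scope.
Lemma Mono (R : realDomainType) (w : seq R) i j :
  sorted (fun x y : R => y <= x) w -> all (fun x : R => 0 <= x) w ->
  (i <= j)%N -> nth 0 w j <= nth 0 w i.
Proof.
move=> hs hn hij.
case: (ltnP j (size w)) => hj.
  apply: (sorted_leq_nth (leT := fun x y : R => y <= x)) => //.
  - by move=> a b c h1 h2; apply: le_trans h1.
  - by rewrite inE; apply: leq_ltn_trans hj.
rewrite nth_default //.
case: (ltnP i (size w)) => hi; last by rewrite nth_default.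
by apply: (all_nthP 0 hn).
Qed.

Lemma dar_eq (R : realDomainType) (s : seq R) (P : seq nat) :
  sorted (fun x y : R => y <= x) s -> all (fun x : R => 0 <= x) s ->
  delete_and_resort s P = [seq nth 0 s i | i <- filter (fun i => i \notin P) (iota 0 (size s))].
Proof.
move=> hs hn; rewrite /delete_and_resort sorted_sort //.
  by move=> a b c h1 h2; apply: le_trans h1.
rewrite sorted_map; apply: sorted_filter.
  by move=> a b c /= h1 h2; apply: le_trans h1.
apply: sub_sorted (iota_sorted 0 _) => a b /= h; exact: Mono.
Qed.

Theorem proposition3p4 (R : realDomainType) (u w : seq R)
  (T X : seq nat) (f : nat -> nat) :
  sorted (fun x y : R => y <= x) u -> all (fun x : R => 0 <= x) u ->
  sorted (fun x y : R => y <= x) w -> all (fun x : R => 0 <= x) w ->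
  (forall r : nat, (r < size u)%N -> nth 0 w r <= nth 0 u r) ->
  uniq T -> all (fun t => t < size u)%N T ->
  uniq X -> all (fun x => x < size w)%N X ->
  {in T &, injective f} ->
  {in T, forall t, f t \in X} ->
  {in T, forall t, f t <= t}%N ->
  forall r : nat, (r < size u - size T)%N ->
    nth 0 (delete_and_resort w X) r <= nth 0 (delete_and_resort u T) r.
Proof.
move=> su nu sw nw hwu uT _ uX _ finj fX fle r hr.
rewrite !dar_eq //.
set FU := filter _ (iota 0 (size u)).
set FW := filter _ (iota 0 (size w)).
have hsz : (r < size FU)%N.
  have : (count (fun i => i \in T) (iota 0 (size u)) <= size T)%N.
    rewrite -size_filter; apply: uniq_leq_size; first exact: filter_uniq (iota_uniq _ _).
    by move=> x; rewrite mem_filter => /andP[].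
  have := count_predC (fun i => i \in T) (iota 0 (size u)).
  rewrite size_iota /FU size_filter.
  have -> : count (predC (fun i => i \in T)) (iota 0 (size u)) = count (fun i => i \notin T) (iota 0 (size u)) by [].
  lia.
set p := nth (size u) FU r.
have hp : (p < size u)%N.
  have : p \in FU by apply: mem_nth.
  by rewrite mem_filter mem_iota => /andP[_ /andP[_]].
have hcT : (count (fun i => i \notin T) (iota 0 p) <= r)%N by apply: K2.
have hTX : (count (fun i => i \in T) (iota 0 p) <= count (fun i => i \in X) (iota 0 p))%N.
  rewrite -!size_filter.
  set sT := [seq i <- iota 0 p | i \in T].
  have -> : size sT = size (map f sT) by rewrite size_map.
  apply: uniq_leq_size.
    rewrite map_inj_in_uniq; first exact: filter_uniq (iota_uniq _ _).
    by move=> x y; rewrite !mem_filter => /andP[hx _] /andP[hy _]; apply: finj.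
  move=> y /mapP[x hx ->]; move: hx; rewrite /sT mem_filter mem_iota => /andP[hxT /andP[_ hxp]].
  rewrite mem_filter fX // mem_iota /=.
  have := fle x hxT; lia.
have hcX : (count (fun i => i \notin X) (iota 0 p) <= r)%N.
  have := count_predC (fun i => i \in T) (iota 0 p).
  have := count_predC (fun i => i \in X) (iota 0 p).
  have -> : count (predC (fun i => i \in T)) (iota 0 p) = count (fun i => i \notin T) (iota 0 p) by [].
  have -> : count (predC (fun i => i \in X)) (iota 0 p) = count (fun i => i \notin X) (iota 0 p) by [].
  lia.
set q := nth (size w) FW r.
have hq : (minn p (size w) <= q)%N by apply: K1.
have eL : nth 0 [seq nth 0 w i | i <- FW] r = nth 0 w q.
  case: (ltnP r (size FW)) => h; first by rewrite (nth_map (size w)).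
  by rewrite /q (nth_default _ h) !nth_default ?size_map.
rewrite eL (nth_map (size u)) // -/p.
apply: (le_trans _ (hwu p hp)).
apply: (le_trans (Mono _ _ _ _ sw nw hq)).
rewrite /minn; case: ltnP => // h.
by rewrite !nth_default.
Qed.
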